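(* Let $\Gamma$ be a graph and let $f:\Gamma\to\Gamma$ be an irreducible, expanding graph map which is a homotopy equivalence and which is periodic on the vertex set of $\Gamma$ (i.e. $f_V$ is a bijection of $\mathcal{V}\Gamma$). Let $n=|\mathcal{E}\Gamma|$. Then $$(\mathfrak{S}(\Gamma)+1)^{1/n}\le\lambda_f,$$ where $\mathfrak{S}(\Gamma)$ is the stack score of $\Gamma$ and $\lambda_f$ is the leading eigenvalue of the transition matrix of $f$.
   Context: A graph $\Gamma$ is a finite 1-dimensional CW complex (multiple edges and loops allowed) with a chosen orientation on each edge; $\mathcal{V}\Gamma$, $\mathcal{E}\Gamma$ (positively oriented edges), $\mathcal{E}^{\pm}\Gamma$ (both orientations); $\bar e$ is the reverse of $e$, $\iota(e),\tau(e)$ its endpoints. An edge path is a nonempty concatenation $u=e_1\cdots e_k$ with $\tau(e_i)=\iota(e_{i+1})$; $|u|=k$ (no cancellation), and $u$ traverses $e$ if $e$ or $\bar e$ occurs in it. A graph map $f:\Gamma_1\to\Gamma_2$ consists of a vertex map $f_V$ and an edge path $f(e)$ for each $e\in\mathcal{E}^\pm\Gamma_1$ with $\iota(f(e))=f_V(\iota(e))$, $f(\bar e)=\overline{f(e)}$; powers are compositions (concatenating images), and $f$ is regarded as a continuous map. A graph isomorphism is a graph map with $f_V$ bijective restricting to a bijection from $\mathcal{E}^\pm\Gamma_1$ onto the single edges of $\Gamma_2$; $\mathrm{Aut}(G)$ is the group of isomorphisms $G\to G$. The transition matrix $T(f)$ has $(i,j)$ entry the number of times $f(e_i)$ traverses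 $e_j$. $f$ is irreducible if $T(f)$ is irreducible and all vertices have valence $\ge3$; $f$ is expanding if $|f^n(e)|\to\infty$ for every edge $e$. Stack score: for a graph $G$ containing $\Gamma$ as a subgraph with $\mathcal{V}G=\mathcal{V}\Gamma$ and $\psi\in\mathrm{Aut}(G)$, let $\sim_\psi$ be the equivalence relation on $\mathcal{E}\Gamma$ (unoriented edges) generated by $a\sim_\psi\psi(a)$ whenever $\psi(a)$ (unoriented) lies in $\mathcal{E}\Gamma$. $\mathfrak{S}(\Gamma)$ is the minimum over all such $(G,\psi)$ of the number of $\sim_\psi$-classes. *)

(* Defs.v *)
From HB Require Import structures.
From mathcomp Require Import all_boot all_order all_algebra all_field.
Set Implicit Arguments. Unset Strict Implicit. Unset Printing Implicit Defensive.
Import Order.TTheory GRing.Theory Num.Theory.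
Local Open Scope ring_scope.

(* A graph Gamma is given by a finite vertex type V, a finite type E of
   positively oriented edges and endpoint maps src (iota) and tgt (tau).
   An oriented edge (element of E^{+-}) is a pair (e, b) : E * bool,
   (e, true) = e and (e, false) = \bar e. *)

Section Graphs.
Variables (V E : finType) (src tgt : E -> V).

Definition orev (x : E * bool) : E * bool := (x.1, ~~ x.2).
Definition oiota (x : E * bool) : V := if x.2 then src x.1 else tgt x.1.
Definition otau (x : E * bool) : V := if x.2 then tgt x.1 else src x.1.

Definition rev_path (p : seq (E * bool)) : seq (E * bool) := rev (map orev p).

Fixpoint walk (u : V) (p : seq (E * bool)) (v : V) : bool :=
  match p with
  | [::] => u == v
  | x :: p' => (oiota x == u) && walk (otau x) p' v
  end.

Definition push (x : E * bool) (s : seq (E * bool)) : seq (E * bool) :=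
  match s with
  | y :: s' => if y == orev x then s' else x :: s
  | [::] => [:: x]
  end.
Definition reduce (p : seq (E * bool)) : seq (E * bool) := foldr push [::] p.

(* A (combinatorial, cellular) map Gamma -> Gamma : a vertex map and, for each
   positive edge e, an edge path image; the image of \bar e is the reverse. *)
Definition oimg (fE : E -> seq (E * bool)) (x : E * bool) : seq (E * bool) :=
  if x.2 then fE x.1 else rev_path (fE x.1).

Definition pimg (fE : E -> seq (E * bool)) (p : seq (E * bool)) :=
  flatten (map (oimg fE) p).

Definition is_graph_map (fV : V -> V) (fE : E -> seq (E * bool)) : Prop :=
  forall e, fE e != [::] /\ walk (fV (src e)) (fE e) (fV (tgt e)).

Definition is_cell_map (fV : V -> V) (fE : E -> seq (E * bool)) : Prop :=
  forall e, walk (fV (src e)) (fE e) (fV (tgt e)).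

(* Homotopy of cellular maps of graphs: vertex tracks gam v from g v to h v
   such that g(e).gam(tau e) and gam(iota e).h(e) are homotopic rel endpoints,
   i.e. have the same free reduction. *)
Definition cell_homotopic (gV : V -> V) (gE : E -> seq (E * bool))
    (hV : V -> V) (hE : E -> seq (E * bool)) : Prop :=
  exists gam : V -> seq (E * bool),
    (forall v, walk (gV v) (gam v) (hV v)) /\
    (forall e, reduce (gE e ++ gam (tgt e)) = reduce (gam (src e) ++ hE e)).

Definition comp_E (gE fE : E -> seq (E * bool)) : E -> seq (E * bool) :=
  fun e => pimg gE (fE e).
Definition id_E : E -> seq (E * bool) := fun e => [:: (e, true)].

Definition is_homotopy_equivalence (fV : V -> V) (fE : E -> seq (E * bool))
  : Prop :=
  exists (gV : V -> V) (gE : E -> seq (E * bool)),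
    is_cell_map gV gE /\
    cell_homotopic (gV \o fV) (comp_E gE fE) id id_E /\
    cell_homotopic (fV \o gV) (comp_E fE gE) id id_E.

Definition fiter (fE : E -> seq (E * bool)) (n : nat) (e : E) :=
  iter n (pimg fE) [:: (e, true)].

Definition expanding (fE : E -> seq (E * bool)) : Prop :=
  forall (e : E) (M : nat), exists N, forall n, (N <= n)%N ->
    (M <= size (fiter fE n e))%N.

Definition transition_matrix (fE : E -> seq (E * bool)) : 'M[algC]_#|E| :=
  \matrix_(i, j) (count (fun x : E * bool => x.1 == enum_val j)
                       (fE (enum_val i)))%:R.

Definition valence (v : V) : nat := #|[set x : E * bool | oiota x == v]|.

Definition irreducible_mx n (A : 'M[algC]_n) : Prop :=
  forall i j, exists k : nat, 0 < (A ^+ k) i j.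

Definition irreducible_map (fE : E -> seq (E * bool)) : Prop :=
  irreducible_mx (transition_matrix fE) /\ forall v : V, (3 <= valence v)%N.

End Graphs.

(* spectral radius: the maximal modulus of a (complex) eigenvalue, i.e. of a
   root of the characteristic polynomial; for an irreducible nonnegative
   matrix this is the Perron-Frobenius (leading) eigenvalue. *)
Definition eigen_list n (A : 'M[algC]_n) : seq algC :=
  sval (closed_field_poly_normal (char_poly A)).
Definition leading_eigenvalue n (A : 'M[algC]_n) : algC :=
  \big[Order.max/0]_(z <- eigen_list A) `|z|.

(* A graph G containing Gamma as a subgraph with the same vertex
   set is given by a finite edge type E' with endpoint maps and an injection
   i : E -> E' preserving endpoints. *)
Definition is_graph_aut (V E' : finType) (srcG tgtG : E' -> V)
    (psiV : V -> V) (psiE : E' * bool -> E' * bool) : Prop :=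
  bijective psiV /\ bijective psiE /\
  (forall x, psiE (orev x) = orev (psiE x)) /\
  (forall x, oiota srcG tgtG (psiE x) = psiV (oiota srcG tgtG x)).

Definition stack_rel (E E' : finType) (i : E -> E')
    (psiE : E' * bool -> E' * bool) : rel E :=
  fun a b => ((psiE (i a, true)).1 == i b) || ((psiE (i b, true)).1 == i a).

Definition num_stack_classes (E E' : finType) (i : E -> E')
    (psiE : E' * bool -> E' * bool) : nat :=
  #|[set [set b | connect (stack_rel i psiE) a b] | a : E]|.

Definition admissible_stack (V E : finType) (src tgt : E -> V) (k : nat)
  : Prop :=
  exists (E' : finType) (srcG tgtG : E' -> V) (i : E -> E')
         (psiV : V -> V) (psiE : E' * bool -> E' * bool),
    injective i /\ (forall e, srcG (i e) = src e /\ tgtG (i e) = tgt e) /\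
    is_graph_aut srcG tgtG psiV psiE /\ num_stack_classes i psiE = k.

Definition is_stack_score (V E : finType) (src tgt : E -> V) (s : nat)
  : Prop :=
  admissible_stack src tgt s /\
  forall k, admissible_stack src tgt k -> (s <= k)%N.

(* Main.v *)
Require Import Defs.
From HB Require Import structures.
From mathcomp Require Import all_boot all_order all_algebra all_field all_fingroup.
From mathcomp Require Import ring zify.
Import Order.TTheory GRing.Theory Num.Theory.

Unset Implicit Arguments.

Section Red.
Variables (V E : finType) (src tgt : E -> V).
Implicit Types (x y : E * bool) (s p q : seq (E * bool)).

Fixpoint redb s : bool :=
  match s with
  | x :: ((y :: _) as s') => (y != orev x) && redb s'
  | _ => true
  end.

Lemma orevK : involutive (@orev E).
Proof. by case=> e b; rewrite /orev /= negbK. Qed.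

Lemma redb_cons x s : redb (x :: s) = (if s is y :: _ then y != orev x else true) && redb s.
Proof. by case: s. Qed.

Lemma redb_push x s : redb s -> redb (push x s).
Proof.
case: s => [|y s] // hs /=; case: ifP => hy.
  by move: hs; rewrite redb_cons => /andP[].
by rewrite redb_cons hy hs.
Qed.

Lemma push_inv x s : redb s -> push (orev x) (push x s) = s.
Proof.
case: s => [|y s] /=; first by rewrite orevK eqxx.
case: ifP => [/eqP -> |hy] hs.
  case: s hs => [|z s] //= /andP [hz _].
  by rewrite (negbTE hz).
by rewrite /= orevK eqxx.
Qed.

Definition act p s := foldr (@push E) s p.

Lemma act_red p s : redb s -> redb (act p s).
Proof. by elim: p => //= x p IH hs; apply: redb_push; apply: IH. Qed.

Lemma reduce_red p : redb (reduce p).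
Proof. exact: (@act_red p [::]). Qed.

Lemma act_cat p q s : act (p ++ q) s = act p (act q s).
Proof. exact: foldr_cat. Qed.

Lemma act_push x t s : redb t -> redb s -> act (push x t) s = push x (act t s).
Proof.
case: t => [|y t] //= ht hs; case: ifP => [/eqP -> | _] //=.
by rewrite -{1}(orevK x) push_inv // act_red //; move: ht; rewrite redb_cons => /andP[].
Qed.

Lemma act_reduce p s : redb s -> act p s = act (reduce p) s.
Proof.
move=> hs; elim: p => //= x p IH.
by rewrite IH /reduce /= act_push // reduce_red.
Qed.

Lemma rev_path_cons x p : Defs.rev_path (x :: p) = Defs.rev_path p ++ [:: orev x].
Proof. by rewrite /Defs.rev_path /= rev_cons cats1. Qed.

Lemma act_rev p s : redb s -> act (Defs.rev_path p) (act p s) = s.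
Proof.
move=> hs; elim: p => //= x p IH.
by rewrite rev_path_cons act_cat /= push_inv ?act_red.
Qed.

Lemma act_eq p q : reduce p = reduce q -> forall s, redb s -> act p s = act q s.
Proof. by move=> h s hs; rewrite act_reduce // h -act_reduce. Qed.

Lemma rev_pathK : involutive (@Defs.rev_path E).
Proof.
move=> p; rewrite /Defs.rev_path map_rev revK -map_comp.
by rewrite (eq_map (g := id)) ?map_id // => x /=; rewrite orevK.
Qed.

Lemma oimg_orev (gE : E -> seq (E * bool)) x : oimg gE (orev x) = Defs.rev_path (oimg gE x).
Proof. by case: x => e [] //=; rewrite /oimg /= rev_pathK. Qed.

Lemma walk1 u x v : walk src tgt u [:: x] v = (oiota src tgt x == u) && (otau src tgt x == v).
Proof. by []. Qed.

Lemma short_inj (fV : V -> V) (fE : E -> seq (E * bool)) :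
  is_graph_map src tgt fV fE -> injective fV ->
  is_homotopy_equivalence src tgt fV fE ->
  forall a b y y', fE a = [:: y] -> fE b = [:: y'] -> y.1 = y'.1 -> a = b.
Proof.
move=> hg hV [gV [gE [_ [[gam [_ H]] _]]]] a b y y' ha hb hy.
have := (hg a).2; have := (hg b).2; rewrite ha hb !walk1.
move=> /andP [/eqP sb /eqP tb] /andP [/eqP sa /eqP ta].
have Ha := H a; have Hb := H b.
rewrite /comp_E ha hb /pimg /= !cats0 /id_E in Ha Hb.
case: y y' hy ha hb sa ta sb tb Ha Hb => e c [e' c'] /= <- ha hb sa ta sb tb Ha Hb.
have [hc|hc] : c' = c \/ c' = ~~ c by case: c c' {ha hb sa ta sb tb Ha Hb} => [] [] ; auto.
  subst c'.
  have es : src a = src b by apply: hV; rewrite -sa -sb.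
  have et : tgt a = tgt b by apply: hV; rewrite -ta -tb.
  rewrite es et Hb in Ha.
  have := @act_eq _ _ Ha [::] erefl.
  rewrite !act_cat /= => h.
  have := congr1 (act (Defs.rev_path (gam (src b)))) h.
  by rewrite !act_rev // => -[->].
subst c'.
have hy' : (e, ~~ c) = orev (e, c) by [].
rewrite hy' oimg_orev in Hb.
rewrite hy' in sb tb.
have es : src b = tgt a by apply: hV; rewrite -sb -ta; rewrite /oiota /otau /=; by case: (c).
have et : tgt b = src a by apply: hV; rewrite -tb -sa; rewrite /oiota /otau /=; by case: (c).
rewrite es et in Hb.
set w := oimg gE (e, c) in Ha Hb.
set G1 := gam (src a) in Ha Hb; set G2 := gam (tgt a) in Ha Hb.
have h1 := @act_eq _ _ Ha [:: (a, false)] erefl.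
rewrite !act_cat /= eqxx in h1.
have h2 := @act_eq _ _ Hb [::] erefl.
rewrite !act_cat /= -h1 act_rev ?act_red // in h2.
have := congr1 (act (Defs.rev_path G2)) h2.
by rewrite !act_rev // => -[].
Qed.
End Red.

Set Implicit Arguments. Unset Strict Implicit. Unset Printing Implicit Defensive.

Section TM.
Variables (E : finType) (fE : E -> seq (E * bool)).
Definition cnt (y : E) (p : seq (E * bool)) := count (fun x : E * bool => x.1 == y) p.

Lemma orevK2 : involutive (@orev E).
Proof. by case=> e b; rewrite /orev /= negbK. Qed.

Lemma cnt_rev y p : cnt y (Defs.rev_path p) = cnt y p.
Proof. by unfold Defs.rev_path; rewrite /cnt count_rev count_map. Qed.

Lemma size_rev_path (p : seq (E * bool)) : size (Defs.rev_path p) = size p.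
Proof. by unfold Defs.rev_path; rewrite size_rev size_map. Qed.

Lemma cnt_oimg y x : cnt y (oimg fE x) = cnt y (fE x.1).
Proof. by rewrite /oimg; case: ifP => // _; rewrite cnt_rev. Qed.

Lemma size_oimg x : size (oimg fE x) = size (fE x.1).
Proof. by rewrite /oimg; case: ifP => // _; rewrite size_rev_path. Qed.

Lemma pimg_cons x p : pimg fE (x :: p) = oimg fE x ++ pimg fE p.
Proof. by []. Qed.

Lemma pimg_cat p q : pimg fE (p ++ q) = pimg fE p ++ pimg fE q.
Proof. by unfold pimg; rewrite map_cat flatten_cat. Qed.

Lemma cnt_pimg y p : cnt y (pimg fE p) = \sum_(x <- p) cnt y (fE x.1).
Proof.
elim: p => [|x p IH]; first by rewrite big_nil.
rewrite pimg_cons /cnt count_cat -/(cnt y (oimg fE x)) -/(cnt y (pimg fE p)).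
by rewrite cnt_oimg IH big_cons.
Qed.

Lemma size_pimg p : size (pimg fE p) = \sum_(x <- p) size (fE x.1).
Proof.
elim: p => [|x p IH]; first by rewrite big_nil.
by rewrite pimg_cons size_cat size_oimg IH big_cons.
Qed.


Lemma cnt_sum (p : seq (E * bool)) (F : E -> nat) :
  \sum_(l < #|E|) (cnt (enum_val l) p * F (enum_val l))%N = \sum_(x <- p) F x.1.
Proof.
elim: p => [|x p IH]; first by rewrite big_nil big1 // => l _; rewrite /cnt /= mul0n.
rewrite big_cons -IH /cnt /=.
rewrite (eq_bigr (fun l => (x.1 == enum_val l) * F (enum_val l) + count (fun x0 : E * bool => x0.1 == enum_val l) p * F (enum_val l))%N); last by move=> l _; rewrite mulnDl.
rewrite big_split /=; congr (_ + _)%N.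
rewrite (bigD1 (enum_rank x.1)) //= enum_rankK eqxx mul1n.
rewrite big1 => [|l hl]; first by rewrite addn0.
case: eqP => // h.
by rewrite h enum_valK eqxx in hl.
Qed.

Local Open Scope ring_scope.
Lemma tm_pow k (i j : 'I_#|E|) :
  (transition_matrix fE ^+ k) i j = (cnt (enum_val j) (fiter fE k (enum_val i)))%:R.
Proof.
elim: k i j => [|k IH] i j.
  rewrite expr0 mxE /fiter /= /cnt /=.
  case: eqP => [->|h]; first by rewrite eqxx.
  by rewrite (inj_eq enum_val_inj) (introF eqP h).
rewrite exprSr -mulmxE mxE.
rewrite (eq_bigr (fun l => ((cnt (enum_val l) (fiter fE k (enum_val i)) * cnt (enum_val j) (fE (enum_val l)))%N)%:R)); last first.
  by move=> l _; rewrite IH mxE natrM.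
rewrite -natr_sum (cnt_sum _ (fun e => cnt (enum_val j) (fE e))) /fiter /= -/(fiter fE k _) cnt_pimg.
by [].
Qed.


Definition occ (y : E) (p : seq (E * bool)) := (0 < cnt y p)%N.

Lemma occ_pimg y p : occ y (pimg fE p) = has (fun x => occ y (fE x.1)) p.
Proof.
rewrite /occ cnt_pimg; elim: p => [|x p IH]; first by rewrite big_nil.
by rewrite big_cons /= addn_gt0 IH.
Qed.

Lemma fiterS k e : fiter fE k.+1 e = pimg fE (fiter fE k e).
Proof. by []. Qed.

Section Reach.
Variable e : E.
Definition Fr (S : {set E}) : {set E} := e |: [set y | [exists x in S, occ y (fE x)]].

Lemma Fr_mono : {homo Fr : X Y / X \subset Y}.
Proof.
move=> X Y hXY; apply/subsetP => y; rewrite !inE => /predU1P [->|]; first by rewrite eqxx.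
move=> /existsP [x /andP [hx hy]]; apply/orP; right; apply/existsP; exists x.
by rewrite hy andbT (subsetP hXY).
Qed.

Lemma occ_iter k y : occ y (fiter fE k e) -> y \in iter k.+1 Fr set0.
Proof.
elim: k y => [|k IH] y.
  by rewrite /occ /cnt /= addn0 lt0b => /eqP <-; rewrite /= setU11.
rewrite fiterS occ_pimg => /hasP [x hx hy].
rewrite [iter _ _ _]/= inE; apply/orP; right; rewrite inE; apply/existsP; exists x.1.
rewrite hy andbT; apply: IH; rewrite /occ /cnt -has_count; apply/hasP; exists x => //.
Qed.

Lemma iter_occ m y : y \in iter m Fr set0 -> exists2 j, (j < m)%N & occ y (fiter fE j e).
Proof.
elim: m y => [|m IH] y; first by rewrite inE.
rewrite [iter _ _ _]/= !inE => /predU1P [->|/existsP [x /andP [hx hy]]].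
  by exists 0%N => //; rewrite /occ /cnt /= eqxx.
have [j hj hxj] := IH _ hx; exists j.+1 => //.
rewrite fiterS occ_pimg; move: hxj; rewrite /occ /cnt -has_count => /hasP [z hz /eqP hz1].
by apply/hasP; exists z => //; rewrite /occ hz1.
Qed.

Lemma reach k y : occ y (fiter fE k e) -> exists2 j, (j < #|E|)%N & occ y (fiter fE j e).
Proof.
move=> /occ_iter hy; apply: iter_occ.
by apply: (subsetP (iter_sub_fix Fr_mono k.+1)).
Qed.
End Reach.

Local Close Scope ring_scope.

Definition long (y : E) := size (fE y) != 1%N.

Hypothesis hne : forall e, fE e != [::].

Lemma size_ge (p : seq (E * bool)) : (size p + count (fun x => long x.1) p <= \sum_(x <- p) size (fE x.1))%N.
Proof.
elim: p => [|x p IH]; first by rewrite big_nil.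
rewrite big_cons /=.
have h : (long x.1 + 1 <= size (fE x.1))%N.
  have := hne x.1; rewrite /long -size_eq0.
  by case: (size (fE x.1)) => [|[|k]].
move: h IH; set a := long x.1; set b := size (fE x.1); lia.
Qed.

Lemma card_long_occ (p : seq (E * bool)) : (#|[set y | long y && occ y p]| <= count (fun x => long x.1) p)%N.
Proof.
apply: (leq_trans _ (_ : size (map (fun x : E * bool => x.1) (filter (fun x => long x.1) p)) <= _)%N); last first.
  by rewrite size_map size_filter.
apply: (leq_trans _ (card_size _)); apply: subset_leq_card; apply/subsetP => y.
rewrite inE => /andP [hl]; rewrite /occ /cnt -has_count => /hasP [x hx /eqP hxy].
by apply/mapP; exists x => //; rewrite mem_filter hxy hl hx.
Qed.

Hypothesis hreach : forall e y, exists k, occ y (fiter fE k e).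

Lemma growth e : (#|[set y | long y]| + 1 <= size (fiter fE #|E| e))%N.
Proof.
pose B k := [set y | long y && [exists j : 'I_k, occ y (fiter fE j e)]].
have hB : forall k, (#|B k| + 1 <= size (fiter fE k e))%N.
  elim=> [|k IH].
    rewrite (_ : B 0%N = set0) ?cards0 //; apply/setP => y; rewrite !inE.
    by case: (long y) => //=; apply/existsP => -[[]].
  rewrite fiterS size_pimg; apply: leq_trans (size_ge _).
  apply: (leq_trans _ (leq_add IH (card_long_occ _))).
  rewrite addnAC leq_add2r.
  apply: leq_trans (leq_card_setU (B k) _).
  apply: subset_leq_card; apply/subsetP => y; rewrite !inE => /andP [hl /existsP [j hj]].
  rewrite hl /=; have [hjk|hjk] := ltnP j k.
    by apply/orP; left; apply/existsP; exists (Ordinal hjk).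
  have ejk : nat_of_ord j = k by apply/eqP; rewrite eqn_leq hjk -ltnS ltn_ord.
  by rewrite -ejk hj orbT.
apply: leq_trans (hB #|E|); rewrite leq_add2r; apply: subset_leq_card.
apply/subsetP => y; rewrite !inE => hl; rewrite hl /=.
have [k hk] := hreach e y; have [j hj hyj] := reach hk.
by apply/existsP; exists (Ordinal hj).
Qed.


Lemma rev_path_cat (p q : seq (E * bool)) : Defs.rev_path (p ++ q) = Defs.rev_path q ++ Defs.rev_path p.
Proof. by unfold Defs.rev_path; rewrite map_cat rev_cat. Qed.

Lemma rev_path_cons2 x (p : seq (E * bool)) : Defs.rev_path (x :: p) = Defs.rev_path p ++ [:: orev x].
Proof. by unfold Defs.rev_path; rewrite /= rev_cons cats1. Qed.

Lemma rev_pathK2 : involutive (@Defs.rev_path E).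
Proof.
move=> p; unfold Defs.rev_path; rewrite map_rev revK -map_comp.
by rewrite (eq_map (g := id)) ?map_id // => x /=; rewrite orevK2.
Qed.

Lemma oimg_orev2 x : oimg fE (orev x) = Defs.rev_path (oimg fE x).
Proof. by case: x => e [] //=; rewrite /oimg /= rev_pathK2. Qed.

Lemma pimg_rev p : pimg fE (Defs.rev_path p) = Defs.rev_path (pimg fE p).
Proof.
elim: p => [|x p IH] //.
rewrite rev_path_cons2 pimg_cat IH pimg_cons rev_path_cat; congr (_ ++ _).
by rewrite oimg_orev2 cats0.
Qed.

Lemma iterp_cat m p q : iter m (pimg fE) (p ++ q) = iter m (pimg fE) p ++ iter m (pimg fE) q.
Proof. by elim: m => //= m ->; rewrite pimg_cat. Qed.

Lemma iterp_rev m p : iter m (pimg fE) (Defs.rev_path p) = Defs.rev_path (iter m (pimg fE) p).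
Proof. by elim: m => //= m ->; rewrite pimg_rev. Qed.

Lemma size_iter1 m x : size (iter m (pimg fE) [:: x]) = size (fiter fE m x.1).
Proof.
case: x => e [] //=; rewrite (_ : [:: (e, false)] = Defs.rev_path [:: (e, true)]) //.
by rewrite iterp_rev size_rev_path.
Qed.

Lemma size_iter_ge p :
  ((#|[set y | long y]| + 1) * size p <= size (iter #|E| (pimg fE) p))%N.
Proof.
elim: p => [|x p IH]; first by rewrite muln0.
rewrite -cat1s iterp_cat /= mulnS.
by rewrite size_cat; apply: leq_add => //; rewrite size_iter1 growth.
Qed.

Lemma pow_growth k e :
  ((#|[set y | long y]| + 1) ^ k <= size (fiter fE (k * #|E|) e))%N.
Proof.
elim: k => [|k IH]; first by [].
rewrite mulSn /fiter iterD expnS; apply: leq_trans (size_iter_ge _).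
by rewrite leq_mul2l IH orbT.
Qed.

Lemma sum_cnt p : (\sum_(l < #|E|) cnt (enum_val l) p)%N = size p.
Proof.
have := cnt_sum p (fun _ => 1%N); rewrite sum1_size => <-.
by apply: eq_bigr => l _; rewrite muln1.
Qed.

Local Open Scope ring_scope.
Lemma rowsum_tm m (i : 'I_#|E|) :
  \sum_j (transition_matrix fE ^+ m) i j = (size (fiter fE m (enum_val i)))%:R.
Proof.
rewrite (eq_bigr _ (fun j _ => tm_pow m i j)) -natr_sum.
by rewrite sum_cnt.
Qed.
End TM.


Section Chain.
Variables (V E : finType) (src tgt : E -> V) (fV : V -> V) (fE : E -> seq (E * bool)).
Hypothesis hg : is_graph_map src tgt fV fE.
Hypothesis hinj : forall a b y y', fE a = [:: y] -> fE b = [:: y'] -> y.1 = y'.1 -> a = b.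

Definition short (e : E) := size (fE e) == 1%N.
Definition Phi (x : E * bool) := head x (oimg fE x).

Lemma short_eq e : short e -> exists y, fE e = [:: y].
Proof. by rewrite /short; case: (fE e) => [|y [|]] //= _; exists y. Qed.

Lemma Phi_short x : short x.1 -> Phi x = if x.2 then head x (fE x.1) else orev (head x (fE x.1)).
Proof.
move=> /short_eq [y hy]; rewrite /Phi /oimg hy.
by case: x.2 => //; unfold Defs.rev_path.
Qed.

Lemma Phi_ends x : short x.1 ->
  oiota src tgt (Phi x) = fV (oiota src tgt x) /\ otau src tgt (Phi x) = fV (otau src tgt x).
Proof.
move=> hs; rewrite Phi_short //; have [y hy] := short_eq hs.
have := (hg x.1).2; rewrite hy /= => /andP [/eqP h1 /eqP h2].
case: x hs hy h1 h2 => e [] //= hs hy h1 h2.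
by rewrite /oiota /otau /orev /= in h1 h2 *; case: (y.2) h1 h2 => /= -> ->.
Qed.

Lemma Phi_orev x : short x.1 -> Phi (orev x) = orev (Phi x).
Proof.
move=> hs; rewrite !Phi_short //; have [y hy] := short_eq hs.
rewrite hy; case: x hs hy => e [] //= _ _; by case: y => ? [].
Qed.

Lemma Phi_fst x : short x.1 -> (Phi x).1 = (head x (fE x.1)).1.
Proof. by move=> hs; rewrite Phi_short //; case: (x.2). Qed.

Lemma Phi_inj x x' : short x.1 -> short x'.1 -> (Phi x).1 = (Phi x').1 -> x.1 = x'.1.
Proof.
move=> hs hs'; rewrite !Phi_fst //.
have [y hy] := short_eq hs; have [y' hy'] := short_eq hs'.
by rewrite hy hy' /=; apply: hinj.
Qed.

Definition xt e t := iter t Phi (e, true).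

Hypothesis hex : forall e, exists2 t, (t < #|E|)%N & ~~ short (xt e t).1.

Lemma exP e : exists t, ~~ short (xt e t).1.
Proof. by have [t _ h] := hex e; exists t. Qed.

Definition dist e := ex_minn (exP e).
Definition endp e := (xt e (dist e)).1.
Definition sgn e := (xt e (dist e)).2.

Lemma dist_long e : ~~ short (endp e).
Proof. by rewrite /endp /dist; case: ex_minnP. Qed.

Lemma dist_min e t : ~~ short (xt e t).1 -> (dist e <= t)%N.
Proof. by rewrite /dist; case: ex_minnP => d _ h /h. Qed.

Lemma dist_lt e : (dist e < #|E|)%N.
Proof. by have [t ht h] := hex e; apply: leq_ltn_trans (dist_min h) ht. Qed.

Lemma before e t : (t < dist e)%N -> short (xt e t).1.
Proof. by move=> ht; apply: contraTT ht => /dist_min; rewrite leqNgt. Qed.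

Lemma dist0 e : ~~ short e -> dist e = 0%N.
Proof. by move=> h; apply/eqP; rewrite -leqn0; apply: dist_min. Qed.

Lemma endp0 e : ~~ short e -> endp e = e.
Proof. by move=> h; rewrite /endp dist0. Qed.

Lemma dist_pos e : short e -> (0 < dist e)%N.
Proof.
move=> h; rewrite lt0n; apply/negP => /eqP h0.
by have := dist_long e; rewrite /endp h0 /= h.
Qed.

Definition next e := (Phi (e, true)).1.

Lemma iter_orev z t : (forall u, (u < t)%N -> short (iter u Phi z).1) ->
  iter t Phi (orev z) = orev (iter t Phi z).
Proof.
elim: t => [|t IH] // h /=.
by rewrite IH ?Phi_orev // => [|u hu]; apply: h => //; apply: ltnW.
Qed.

Lemma xt_next e t : short e -> (t < dist e)%N -> (xt (next e) t).1 = (xt e t.+1).1.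
Proof.
move=> hs ht; rewrite /xt /next iterSr.
case E1: (Phi (e, true)) => [e' []] //.
have -> : (e', true) = orev (e', false) by [].
rewrite iter_orev // => u hu.
have := before (leq_ltn_trans hu ht); by rewrite /xt iterSr E1.
Qed.

Lemma dist_next e : short e -> dist (next e) = (dist e).-1.
Proof.
move=> hs; have d0 := dist_pos hs.
apply/eqP; rewrite eqn_leq; apply/andP; split.
  have h1 : ((dist e).-1 < dist e)%N by rewrite prednK.
  apply: dist_min; rewrite xt_next // prednK //; exact: dist_long.
rewrite -ltnS prednK //.
case: (ltnP (dist (next e)) (dist e)) => [h|h]; last by rewrite ltnW.
have := dist_long (next e); rewrite /endp xt_next // => h2.
by apply: dist_min.
Qed.


Lemma endp_next e : short e -> endp (next e) = endp e.
Proof.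
move=> hs; have d0 := dist_pos hs.
rewrite /endp dist_next // xt_next ?prednK //.
Qed.

Lemma ends_xt e t : (t <= dist e)%N ->
  oiota src tgt (xt e t) = iter t fV (src e) /\ otau src tgt (xt e t) = iter t fV (tgt e).
Proof.
elim: t => [|t IH] ht; first by [].
have [h1 h2] := IH (ltnW ht).
have hs := before ht.
rewrite /xt /= -/(xt e t); have [k1 k2] := Phi_ends hs.
by rewrite k1 k2 h1 h2.
Qed.

Lemma inj_chain t : forall e e', dist e = t -> dist e' = t -> endp e = endp e' -> e = e'.
Proof.
elim: t => [|t IH] e e' h h' he.
  have l : ~~ short e by have := dist_long e; rewrite /endp h.
  have l' : ~~ short e' by have := dist_long e'; rewrite /endp h'.
  by rewrite -(endp0 l) -(endp0 l').
have s : short e by have := @before e 0%N; rewrite h => /(_ (ltn0Sn t)).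
have s' : short e' by have := @before e' 0%N; rewrite h' => /(_ (ltn0Sn t)).
have := IH (next e) (next e'); rewrite !dist_next // !endp_next // h h' /=.
move=> /(_ erefl erefl he) hn.
by have := @Phi_inj (e, true) (e', true) s s' hn.
Qed.


Variable m : nat.
Hypothesis hper : forall v, iter m.+1 fV v = v.
Hypothesis hm : (#|E| < m.+1)%N.
Local Notation M := m.+1.

Definition iE (e : E) : E * 'I_M := (endp e, inord (dist e)).

Lemma dist_ltM e : (dist e < M)%N.
Proof. exact: ltn_trans (dist_lt e) hm. Qed.

Lemma iE_inj : injective iE.
Proof.
move=> e e' [he hd].
have : dist e = dist e'.
  by have := congr1 (@nat_of_ord _) hd; rewrite !inordK ?dist_ltM.
by move=> hd'; apply: (inj_chain hd' erefl he).
Qed.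

Definition cc (rj : E * 'I_M) : bool :=
  if [pick e | iE e == rj] is Some e then sgn e else true.

Lemma cc_iE e : cc (iE e) = sgn e.
Proof.
rewrite /cc; case: pickP => [e' /eqP /iE_inj -> //|].
by move=> /(_ e); rewrite eqxx.
Qed.

Definition srcG (rj : E * 'I_M) := iter (M - rj.2) fV (oiota src tgt (rj.1, cc rj)).
Definition tgtG (rj : E * 'I_M) := iter (M - rj.2) fV (otau src tgt (rj.1, cc rj)).

Lemma iter_back e v : iter (M - dist e) fV (iter (dist e) fV v) = v.
Proof. by rewrite -iterD subnK ?hper // ltnW // dist_ltM. Qed.

Lemma srcG_iE e : srcG (iE e) = src e /\ tgtG (iE e) = tgt e.
Proof.
rewrite /srcG /tgtG cc_iE /= inordK ?dist_ltM //.
have [h1 h2] := @ends_xt e (dist e) (leqnn _).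
have -> : (endp e, sgn e) = xt e (dist e) by rewrite /endp /sgn; case: (xt e _).
by rewrite h1 h2 !iter_back.
Qed.

Definition psiE (x : (E * 'I_M) * bool) : (E * 'I_M) * bool :=
  ((x.1.1, ord_pred x.1.2), (x.2 == cc x.1) == cc (x.1.1, ord_pred x.1.2)).
Definition psiI (x : (E * 'I_M) * bool) : (E * 'I_M) * bool :=
  ((x.1.1, ordS x.1.2), (x.2 == cc x.1) == cc (x.1.1, ordS x.1.2)).

Lemma eqbK3 (a b c : bool) : (((a == b) == c) == c) == b = a.
Proof. by case: a; case: b; case: c. Qed.

Lemma psiE_bij : bijective psiE.
Proof.
exists psiI => [[[r j] d]|[[r j] d]]; rewrite /psiE /psiI /=.
  by rewrite ord_predK eqbK3.
by rewrite ordSK eqbK3.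
Qed.

Lemma psiE_orev x : psiE (orev x) = orev (psiE x).
Proof.
case: x => [[r j] d]; rewrite /psiE /orev /=; congr (_, _).
by case: d; case: (cc _); case: (cc _).
Qed.

Lemma oiota_cc r (d c : bool) :
  (if d then oiota src tgt (r, c) else otau src tgt (r, c)) = oiota src tgt (r, d == c).
Proof. by rewrite /oiota /otau; case: d; case: c. Qed.

Lemma ord_pred_val (j : 'I_M) : val (ord_pred j) = if val j == 0%N then m else (val j).-1.
Proof.
rewrite /ord_pred /=; case: j => [[|j] hj] /=; first by rewrite modn_small.
by rewrite modnDr modn_small // ltnW.
Qed.

Lemma iter_pred (j : 'I_M) v : iter (M - ord_pred j) fV v = fV (iter (M - j) fV v).
Proof.
rewrite ord_pred_val; case: j => [[|j] hj] /=.
  by rewrite subSnn -[fV (iter m fV v)]/(iter m.+1 fV v) hper.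
by rewrite subSS subSn //; lia.
Qed.

Lemma psiE_iota x : oiota srcG tgtG (psiE x) = fV (oiota srcG tgtG x).
Proof.
case: x => [[r j] d]; rewrite /oiota /psiE /srcG /tgtG /=.
set c1 := cc (r, ord_pred j); set c0 := cc (r, j).
have e1 : (if (d == c0) == c1 then iter (M - ord_pred j) fV (oiota src tgt (r, c1))
             else iter (M - ord_pred j) fV (otau src tgt (r, c1))) =
          iter (M - ord_pred j) fV (oiota src tgt (r, ((d == c0) == c1) == c1)).
  by rewrite -oiota_cc; case: ifP.
have e2 : (if d then iter (M - j) fV (oiota src tgt (r, c0))
             else iter (M - j) fV (otau src tgt (r, c0))) =
          iter (M - j) fV (oiota src tgt (r, d == c0)).
  by rewrite -oiota_cc; case: ifP.
rewrite /oiota in e1 e2; rewrite e1 e2 iter_pred.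
by have -> : ((d == c0) == c1) == c1 = (d == c0) by case: (d); case: (c0); case: (c1).
Qed.


Lemma psi_iE e : short e -> (psiE (iE e, true)).1 = iE (next e).
Proof.
move=> hs; have d0 := dist_pos hs.
rewrite /psiE /iE /= endp_next // dist_next //; congr (_, _).
apply: val_inj; rewrite ord_pred_val /= inordK ?dist_ltM //.
rewrite inordK; last by apply: leq_ltn_trans (leq_pred _) (dist_ltM e).
by rewrite (negbTE (lt0n_neq0 d0)).
Qed.

Lemma conn_endp e : connect (stack_rel iE psiE) e (endp e).
Proof.
move: {2}(dist e) (erefl (dist e)) => t; elim: t e => [|t IH] e h.
  have l : ~~ short e by have := dist_long e; rewrite /endp h.
  by rewrite endp0.
have s : short e by have := @before e 0%N; rewrite h => /(_ (ltn0Sn t)).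
apply: (@connect_trans _ _ (next e)).
  by apply: connect1; rewrite /stack_rel psi_iE // eqxx.
by rewrite -endp_next //; apply: IH; rewrite dist_next // h.
Qed.

Lemma classes_le : (num_stack_classes iE psiE <= #|[set y | ~~ short y]|)%N.
Proof.
set R := stack_rel iE psiE.
have symR : connect_sym R by apply: sym_connect_sym => a b; rewrite /R /stack_rel orbC.
apply: leq_trans (leq_imset_card (fun a => [set b | connect R a b]) [set y | ~~ short y]).
apply: subset_leq_card; apply/subsetP => X /imsetP [a _ ->].
apply/imsetP; exists (endp a); first by rewrite inE dist_long.
by apply/setP => b; rewrite !inE (same_connect symR (conn_endp a)).
Qed.

Lemma admissible (hbij : bijective fV) : admissible_stack src tgt (num_stack_classes iE psiE).
Proof.
exists (E * 'I_M)%type, srcG, tgtG, iE, fV, psiE.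
split; first exact: iE_inj.
split; first by move=> e; apply: srcG_iE.
split=> //; split=> //; split; first exact: psiE_bij.
split; [exact: psiE_orev | exact: psiE_iota].
Qed.
End Chain.

Section Spec.
Local Open Scope ring_scope.


Lemma scalar_bound (z mu nu C : algC) (u : nat -> algC) :
  0 <= mu -> mu < nu -> `|z| <= mu -> 0 <= C ->
  (forall k, `|u k.+1 - z * u k| <= C * nu ^+ k) ->
  forall k, `|u k| <= (`|u 0| + C / (nu - mu)) * nu ^+ k.
Proof.
move=> mu0 munu zmu C0 hu.
have dpos : 0 < nu - mu by rewrite subr_gt0.
have nu0 : 0 <= nu by apply: ltW; apply: le_lt_trans munu.
set A := _ + _.
have A0 : 0 <= A by apply: addr_ge0; [exact: normr_ge0 | apply: divr_ge0 => //; exact: ltW].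
have key : C + mu * A <= A * nu.
  rewrite -subr_ge0.
  have -> : A * nu - (C + mu * A) = `|u 0| * (nu - mu).
    rewrite /A; field; by rewrite lt0r_neq0.
  by apply: mulr_ge0 => //; exact: ltW.
elim=> [|k IH]; first by rewrite expr0 mulr1 lerDl; apply: divr_ge0 => //; exact: ltW.
have e : u k.+1 = (u k.+1 - z * u k) + z * u k by rewrite subrK.
rewrite e (le_trans (ler_normD _ _)) //.
rewrite exprS mulrA.
apply: (le_trans _ (ler_wpM2r (exprn_ge0 k nu0) key)).
rewrite mulrDl; apply: lerD; first exact: hu.
rewrite normrM -mulrA; apply: ler_pM => //.
Qed.

Section MatBound.
Variables (n' : nat) (A : 'M[algC]_n'.+1) (i : 'I_n'.+1) (mu nu : algC).
Hypotheses (mu0 : 0 <= mu) (munu : mu < nu).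
Definition phi (M : 'M[algC]_n'.+1) := \sum_j M i j.

Lemma mat_bound (zs : seq algC) (B : 'M_n'.+1) :
  (forall z, z \in zs -> `|z| <= mu) ->
  horner_mx A (\prod_(z <- zs) ('X - z%:P)) *m B = 0 ->
  exists C, 0 <= C /\ forall k, `|phi (A ^+ k *m B)| <= C * nu ^+ k.
Proof.
elim: zs B => [|z zs IH] B hz.
  rewrite big_nil rmorph1 mul1mx => ->.
  exists 0; split => // k; rewrite mulmx0 /phi big1 ?normr0 ?mul0r // => j _.
  by rewrite mxE.
rewrite big_cons mulrC rmorphM /= rmorphB /= horner_mx_X horner_mx_C -mulmxE.
rewrite -mulmxA => hB.
have [C [C0 hC]] := IH _ (fun w hw => hz w (mem_behead (s := z :: zs) hw)) hB.
have hzz : `|z| <= mu by apply: hz; rewrite inE eqxx.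
pose u k := phi (A ^+ k *m B).
have hu : forall k, `|u k.+1 - z * u k| <= C * nu ^+ k.
  move=> k; have <- : phi (A ^+ k *m ((A - z%:M) *m B)) = u k.+1 - z * u k.
    rewrite /u /phi mulmxA mulmxBr mul_mx_scalar mulmxBl -scalemxAl.
    rewrite exprSr -mulmxE mulr_sumr -sumrB; apply: eq_bigr => j _.
    by rewrite !mxE.
  exact: hC.
exists (`|u 0| + C / (nu - mu)); split.
  apply: addr_ge0; [exact: normr_ge0 | apply: divr_ge0 => //].
  by apply: ltW; rewrite subr_gt0.
move=> k; exact: (@scalar_bound z mu nu C u mu0 munu hzz C0 hu k).
Qed.
End MatBound.
Lemma bigmax_norm_ub (s : seq algC) :
  0 <= \big[Order.max/0]_(z <- s) `|z| /\
  forall z, z \in s -> `|z| <= \big[Order.max/0]_(z <- s) `|z|.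
Proof.
elim: s => [|x s [IH0 IH]]; first by rewrite big_nil; split => //.
rewrite big_cons; set m := \big[_/_]_(_ <- _) _.
have cmp : (`|x| >=< m)%O.
  by apply: real_comparable; rewrite ?normr_real ?ger0_real.
rewrite (comparable_maxEgt cmp); case: ifP => hlt.
  split; first exact: normr_ge0.
  move=> z; rewrite inE => /predU1P [->//|/IH hz].
  exact: (le_trans hz (ltW hlt)).
split; first exact: IH0.
move=> z; rewrite inE => /predU1P [->|/IH //].
have hm : m \is Num.real by apply: ger0_real.
by rewrite (real_leNgt (normr_real x) hm) hlt.
Qed.

Lemma bern (t : algC) k : 1 <= t -> 1 + k%:R * (t - 1) <= t ^+ k.
Proof.
move=> t1; have d0 : 0 <= t - 1 by rewrite subr_ge0.
elim: k => [|k IH]; first by rewrite mul0r addr0 expr0.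
rewrite exprSr; set a := 1 + _ in IH.
have a1 : 1 <= a by rewrite /a lerDl mulr_ge0.
have -> : 1 + k.+1%:R * (t - 1) = a + (t - 1) by rewrite /a -natr1 mulrDl mul1r addrA.
apply: (@le_trans _ _ (a * t)); last first.
  by rewrite ler_wpM2r // (le_trans ler01 t1).
have -> : a * t = a + a * (t - 1) by rewrite mulrBr mulr1 addrC subrK.
by rewrite lerD2l ler_peMl.
Qed.

Lemma spectral n (A : 'M[algC]_n) (i : 'I_n) (d : nat) (R : algC) :
  (0 < d)%N -> 1 <= R ->
  (forall k, R ^+ k <= \sum_j (A ^+ (k * d)%N) i j) ->
  d.-root R <= leading_eigenvalue A.
Proof.
case: n A i => [|n'] A i; first by case: i.
move=> d0 R1 hR.
have R0 : 0 <= R by apply: le_trans R1.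
rewrite /leading_eigenvalue /eigen_list.
case: (closed_field_poly_normal (char_poly A)) => zs /= hzs.
rewrite (monicP (char_poly_monic A)) scale1r in hzs.
have [mu0 hmu] := bigmax_norm_ub zs.
set mu := \big[_/_]_(_ <- _) _ in mu0 hmu *.
set r0 := d.-root R.
have r00 : 0 <= r0 by rewrite rootC_ge0.
rewrite (real_leNgt (ger0_real r00) (ger0_real mu0)); apply/negP => hlt.
set nu := (mu + r0) / 2.
have [h1 h2] := midf_lt hlt.
have nu0 : 0 < nu by apply: le_lt_trans h1.
have := @mat_bound n' A i mu nu mu0 h1 zs 1 hmu.
rewrite mulmx1 -hzs Cayley_Hamilton => /(_ erefl) [C [C0 hC]].
set q := nu ^+ d.
have q0 : 0 < q by rewrite exprn_gt0.
have qR : q < R.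
  have := ltrXn2r d (ltW nu0) h2; rewrite rootCK // => ->.
  by rewrite -lt0n.
set t := R / q.
have t1 : 1 < t by rewrite /t ltr_pdivlMr // mul1r.
have htk : forall k, t ^+ k <= C.
  move=> k; have g1 := hR k; have g2 := hC (k * d)%N; rewrite mulmx1 in g2.
  have x0 : 0 <= \sum_j (A ^+ (k * d)%N) i j.
    by apply: le_trans g1; rewrite exprn_ge0.
  rewrite /phi ger0_norm // in g2.
  have := le_trans g1 g2.
  rewrite mulnC exprM -/q.
  have -> : R = t * q by rewrite /t divfK // gt_eqF.
  by rewrite exprMn ler_pM2r // exprn_gt0.
set k := Num.bound (C / (t - 1)).
have tm : 0 < t - 1 by rewrite subr_gt0.
have hk : C / (t - 1) < k%:R by apply: archi_boundP; rewrite divr_ge0 // ltW.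
rewrite ltr_pdivrMr // in hk.
have := le_trans (@bern t k (ltW t1)) (htk k).
have : C < 1 + k%:R * (t - 1) by apply: lt_le_trans hk _; rewrite lerDr.
move=> a b; have := lt_le_trans a b; by rewrite ltxx.
Qed.

End Spec.

Local Open Scope ring_scope.

Theorem corollary6p3 (V E : finType) (src tgt : E -> V)
    (fV : V -> V) (fE : E -> seq (E * bool)) (s : nat) :
  (0 < #|V|)%N ->
  is_graph_map src tgt fV fE ->
  irreducible_map src tgt fE ->
  expanding fE ->
  is_homotopy_equivalence src tgt fV fE ->
  bijective fV ->
  is_stack_score src tgt s ->
  (#|E|).-root (s.+1)%:R <= leading_eigenvalue (transition_matrix fE).
Proof.
move=> hV0 hg [hirr hval] hexp hhe hbij [hadm hmin].
have hne : forall e, fE e != [::] by move=> e; exact: (hg e).1.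
have hinj := @short_inj V E src tgt fV fE hg (bij_inj hbij) hhe.
have hreach : forall e y, exists k, occ y (fiter fE k e).
  move=> e y; have [k hk] := hirr (enum_rank e) (enum_rank y).
  by exists k; move: hk; rewrite tm_pow !enum_rankK ltr0n.
have hex : forall e, exists2 t, (t < #|E|)%N & ~~ short fE (xt fE e t).1.
  move=> e.
  case: (boolP [exists t : 'I_#|E|, ~~ short fE (xt fE e t).1]) => [/existsP [t ht]|hall].
    by exists t.
  exfalso.
  have hall' : forall t, (t < #|E|)%N -> short fE (xt fE e t).1.
    move=> t ht; move/existsPn: hall => /(_ (Ordinal ht)); by rewrite negbK.
  have oimg_short : forall x, short fE x.1 -> oimg fE x = [:: Phi fE x].
    move=> x hs; rewrite /Phi.
    have : size (oimg fE x) = 1%N by rewrite size_oimg; apply/eqP.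
    by case: (oimg fE x) => [|a [|]].
  have hfit : forall k, (k <= #|E|)%N -> fiter fE k e = [:: xt fE e k].
    elim=> [|k IH] hk //.
    rewrite fiterS IH ?(ltnW hk) // pimg_cons cats0 oimg_short ?hall' //.
  have allshort : forall y, short fE y.
    move=> y; have [k hk] := hreach e y; have [j hj hy] := reach hk.
    move: hy; rewrite (hfit j (ltnW hj)) /occ /cnt -has_count => /hasP [z].
    by rewrite inE => /eqP -> /eqP <-; apply: hall'.
  have hs1 : forall k, size (fiter fE k e) = 1%N.
    elim=> [|k IH] //; rewrite fiterS size_pimg.
    rewrite (eq_bigr (fun _ => 1%N)) ?sum1_size // => x _.
    exact: (eqP (allshort x.1)).
  have [N hN] := hexp e 2%N; have := hN N (leqnn N); by rewrite hs1.
have [m [hper hm]] : exists m, (forall v, iter m.+1 fV v = v) /\ (#|E| < m.+1)%N.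
  pose p := perm (bij_inj hbij).
  have hp : forall k v, iter k fV v = (p ^+ k)%g v.
    elim=> [|k IH] v; first by rewrite expg0 perm1.
    by rewrite expgSr permM permE /= IH.
  have o0 : (0 < #[p]%g * #|E|.+1)%N by rewrite muln_gt0 order_gt0.
  exists (#[p]%g * #|E|.+1).-1; rewrite prednK //; split.
    by move=> v; rewrite hp expgM expg_order expg1n perm1.
  by apply: leq_pmull; rewrite order_gt0.
have hsL : (s <= #|[set y | long fE y]|)%N.
  apply: leq_trans (hmin _ (admissible hg hinj hex hper hm hbij)) _.
  rewrite (_ : [set y | long fE y] = [set y | ~~ short fE y]); first exact: (classes_le hex hm).
  by apply/setP => y; rewrite !inE.
have [v _] : exists v, v \in V by apply/card_gt0P.
have : (0 < #|[set x : E * bool | oiota src tgt x == v]|)%N by apply: leq_trans (hval v).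
move=> /card_gt0P [x _]; set e0 := x.1.
apply: (@spectral _ _ (enum_rank e0)).
- by apply/card_gt0P; exists e0.
- by rewrite ler1n.
move=> k; rewrite rowsum_tm -natrX ler_nat enum_rankK.
apply: leq_trans (pow_growth hne hreach k e0).
case: k => [|k] //; rewrite leq_exp2r //.
by rewrite addn1 ltnS.
Qed.
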